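(* Let $\mathfrak{F}$ be any tube $\boldsymbol{x}(u,\phi)=\boldsymbol{a}(u)+r\cos\phi\,\boldsymbol{h}(u)+r\sin\phi\,\boldsymbol{b}(u)$ in $\mathbb{E}^3$ about a regular unit-speed curve $\boldsymbol{a}$ of finite length with curvature $\kappa>0$, with $0<r<\min 1/|\kappa|$, and let $W$ be any open portion of $\mathfrak{F}$ on which $\cos\phi\neq0$ (equivalently $K\neq0$). Then there is no constant real $3\times3$ matrix $A$ such that the Gauss map $\boldsymbol{N}$ of $\mathfrak{F}$ satisfies $\Delta^{II}\boldsymbol{N}=A\boldsymbol{N}$ on $W$; i.e., every tube in $\mathbb{E}^3$ is of coordinate infinite type Gauss map with respect to the second fundamental form. *)

(* Defs.v *)
From Stdlib Require Import Reals.
From Coquelicot Require Import Coquelicot.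
Open Scope R_scope.

Definition V3 := (R * R * R)%type.
Definition mkV (x y z : R) : V3 := (x, y, z).
Definition c1 (v : V3) : R := fst (fst v).
Definition c2 (v : V3) : R := snd (fst v).
Definition c3 (v : V3) : R := snd v.
Definition vadd (v w : V3) : V3 := mkV (c1 v + c1 w) (c2 v + c2 w) (c3 v + c3 w).
Definition vscal (k : R) (v : V3) : V3 := mkV (k * c1 v) (k * c2 v) (k * c3 v).
Definition dot (v w : V3) : R := c1 v * c1 w + c2 v * c2 w + c3 v * c3 w.
Definition cross (v w : V3) : V3 :=
  mkV (c2 v * c3 w - c3 v * c2 w) (c3 v * c1 w - c1 v * c3 w) (c1 v * c2 w - c2 v * c1 w).
Definition vnorm (v : V3) : R := sqrt (dot v v).

Definition M3 := (V3 * V3 * V3)%type.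
Definition mapply (A : M3) (v : V3) : V3 :=
  mkV (dot (fst (fst A)) v) (dot (snd (fst A)) v) (dot (snd A) v).

Definition vder (f : R -> V3) (t : R) : V3 :=
  mkV (Derive (fun s => c1 (f s)) t) (Derive (fun s => c2 (f s)) t)
      (Derive (fun s => c3 (f s)) t).

Definition du (F : R -> R -> V3) (u p : R) : V3 := vder (fun s => F s p) u.
Definition dp (F : R -> R -> V3) (u p : R) : V3 := vder (fun q => F u q) p.
Definition pu (f : R -> R -> R) (u p : R) : R := Derive (fun s => f s p) u.
Definition pp (f : R -> R -> R) (u p : R) : R := Derive (fun q => f u q) p.

Definition smooth_on (f : R -> R) (al be : R) : Prop :=
  forall (n : nat) (t : R), al < t < be -> ex_derive (Derive_n f n) t.
Definition smooth_curve (a : R -> V3) (al be : R) : Prop :=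
  smooth_on (fun t => c1 (a t)) al be /\ smooth_on (fun t => c2 (a t)) al be /\
  smooth_on (fun t => c3 (a t)) al be.

Definition tangent (a : R -> V3) (u : R) : V3 := vder a u.
Definition curvature (a : R -> V3) (u : R) : R := vnorm (vder (vder a) u).
Definition pnormal (a : R -> V3) (u : R) : V3 :=
  vscal (/ curvature a u) (vder (vder a) u).
Definition binormal (a : R -> V3) (u : R) : V3 := cross (tangent a u) (pnormal a u).

Definition tube (a : R -> V3) (r : R) (u p : R) : V3 :=
  vadd (a u) (vadd (vscal (r * cos p) (pnormal a u)) (vscal (r * sin p) (binormal a u))).

Definition gauss (X : R -> R -> V3) (u p : R) : V3 :=
  let n := cross (du X u p) (dp X u p) in vscal (/ vnorm n) n.

Definition IIL (X : R -> R -> V3) (u p : R) : R := dot (du (du X) u p) (gauss X u p).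
Definition IIM (X : R -> R -> V3) (u p : R) : R := dot (dp (du X) u p) (gauss X u p).
Definition IIN (X : R -> R -> V3) (u p : R) : R := dot (dp (dp X) u p) (gauss X u p).
Definition detII (X : R -> R -> V3) (u p : R) : R :=
  IIL X u p * IIN X u p - IIM X u p ^ 2.

(* Laplace operator of the (nondegenerate) second fundamental form:
   Delta^II f = -1/sqrt|D| * sum_ij d_i ( sqrt|D| L^{ij} d_j f ),
   D = LN - M^2, (L^{ij}) = inverse of [[L, M], [M, N]]. *)
Definition laplaceII (X : R -> R -> V3) (f : R -> R -> R) (u p : R) : R :=
  let w := fun s q => sqrt (Rabs (detII X s q)) in
  let g11 := fun s q => IIN X s q / detII X s q in
  let g12 := fun s q => - IIM X s q / detII X s q in
  let g22 := fun s q => IIL X s q / detII X s q in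
  - / w u p *
    ( Derive (fun s => w s p * (g11 s p * pu f s p + g12 s p * pp f s p)) u
    + Derive (fun q => w u q * (g12 u q * pu f u q + g22 u q * pp f u q)) p ).

Definition laplaceII_vec (X : R -> R -> V3) (F : R -> R -> V3) (u p : R) : V3 :=
  mkV (laplaceII X (fun s q => c1 (F s q)) u p)
      (laplaceII X (fun s q => c2 (F s q)) u p)
      (laplaceII X (fun s q => c3 (F s q)) u p).

(* Main.v *)
Require Import Defs.
From Stdlib Require Import Reals.
From Coquelicot Require Import Coquelicot.
Open Scope R_scope.
From Stdlib Require Import Lra.
Import Defs.

Lemma DRconst (k x : R) : is_derive (fun _ : R => k) x 0.
Proof. apply (is_derive_const k x). Qed.
Lemma DRid (x : R) : is_derive (fun t : R => t) x 1.
Proof. apply (is_derive_id x). Qed.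
Lemma DRplus (f g : R -> R) (x df dg : R) : is_derive f x df -> is_derive g x dg ->
  is_derive (fun t => f t + g t) x (df + dg).
Proof. intros H1 H2. apply (is_derive_plus f g x df dg H1 H2). Qed.
Lemma DRmult (f g : R -> R) (x df dg : R) : is_derive f x df -> is_derive g x dg ->
  is_derive (fun t => f t * g t) x (df * g x + f x * dg).
Proof. intros H1 H2. apply (is_derive_mult f g x df dg H1 H2). intros; apply Rmult_comm. Qed.
Lemma DRopp (f : R -> R) (x df : R) : is_derive f x df -> is_derive (fun t => - f t) x (- df).
Proof. intros H1. apply (is_derive_opp f x df H1). Qed.
Lemma DRminus (f g : R -> R) (x df dg : R) : is_derive f x df -> is_derive g x dg ->
  is_derive (fun t => f t - g t) x (df - dg).
Proof. intros H1 H2. apply (DRplus _ _ _ _ _ H1 (DRopp _ _ _ H2)). Qed.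
Lemma DRinv (f : R -> R) (x df : R) : is_derive f x df -> f x <> 0 ->
  is_derive (fun t => / f t) x (- df / f x ^ 2).
Proof. intros; apply is_derive_inv; auto. Qed.
Lemma DRsqrt (f : R -> R) (x df : R) : is_derive f x df -> 0 < f x ->
  is_derive (fun t => sqrt (f t)) x (df / (2 * sqrt (f x))).
Proof. intros; apply is_derive_sqrt; auto. Qed.
Lemma DRabs (f : R -> R) (x df : R) : is_derive f x df -> f x <> 0 ->
  is_derive (fun t => Rabs (f t)) x (sign (f x) * df).
Proof. intros; apply is_derive_Rabs; auto. Qed.
Lemma DRcos x : is_derive cos x (- sin x).
Proof. apply is_derive_cos. Qed.
Lemma DRsin x : is_derive sin x (cos x).
Proof. apply is_derive_sin. Qed.
Lemma DRext (f g : R -> R) (x l l' : R) : (forall t, f t = g t) -> is_derive f x l -> l = l' -> is_derive g x l'.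
Proof. intros H H1 <-. apply (is_derive_ext f g x l); auto. Qed.
Lemma DRext_loc (f g : R -> R) (x l l' : R) : locally x (fun t => f t = g t) -> is_derive f x l -> l = l' ->
  is_derive g x l'.
Proof. intros H H1 <-. apply (is_derive_ext_loc f g x l); auto. Qed.
Lemma DRval (f : R -> R) (x l : R) : is_derive f x l -> Derive f x = l.
Proof. apply is_derive_unique. Qed.
Lemma DRex (f : R -> R) (x : R) : ex_derive f x -> is_derive f x (Derive f x).
Proof. apply Derive_correct. Qed.

Lemma loc_interval (al be s : R) : al < s < be -> locally s (fun t => al < t < be).
Proof.
  intros H. apply (open_and (fun t => al < t) (fun t => t < be)).
  apply open_gt. apply open_lt. exact H.
Qed.

Lemma loc_neq0 (f : R -> R) x : continuity_pt f x -> f x <> 0 -> locally x (fun t => f t <> 0).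
Proof.
  intros Hc Hx.
  assert (Hp : 0 < Rabs (f x)) by (apply Rabs_pos_lt; auto).
  destruct (proj1 (continuity_pt_locally f x) Hc (mkposreal _ Hp)) as [e He].
  exists e. intros y Hy. specialize (He y Hy). simpl in He.
  intros E. rewrite E in He. rewrite Rminus_0_l, Rabs_Ropp in He. lra.
Qed.

Lemma D_zero_loc (f : R -> R) (x l : R) : locally x (fun t => f t = 0) -> is_derive f x l -> l = 0.
Proof.
  intros H H1.
  assert (H2 : is_derive (fun _ : R => 0) x l).
  { apply (is_derive_ext_loc f (fun _ : R => 0) x l); auto. }
  pose proof (is_derive_unique _ _ _ H2) as E. rewrite Derive_const in E. auto.
Qed.

Ltac vs := cbn [c1 c2 c3 mkV vadd vscal cross dot fst snd] in *.
Ltac vx := unfold dot, cross, vadd, vscal, mkV, c1, c2, c3 in *; cbn [fst snd] in *.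
Ltac vl := cbn [c1 c2 c3 mkV vadd vscal fst snd] in *.
Lemma V3eq (v w : V3) : c1 v = c1 w -> c2 v = c2 w -> c3 v = c3 w -> v = w.
Proof. destruct v as [[x y] z], w as [[x' y'] z']; vs; intros -> -> ->; reflexivity. Qed.

Definition VD (f : R -> V3) (t : R) (v : V3) : Prop :=
  is_derive (fun s => c1 (f s)) t (c1 v) /\ is_derive (fun s => c2 (f s)) t (c2 v) /\
  is_derive (fun s => c3 (f s)) t (c3 v).

Lemma VD_vder f t v : VD f t v -> vder f t = v.
Proof. intros [H1 [H2 H3]]. unfold vder. apply V3eq; vs; apply DRval; auto. Qed.

Lemma VD_ext_loc f g t v : locally t (fun s => f s = g s) -> VD f t v -> VD g t v.
Proof.
  intros H [H1 [H2 H3]]. split; [|split];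
  [eapply DRext_loc; [|exact H1|reflexivity] | eapply DRext_loc; [|exact H2|reflexivity]
  | eapply DRext_loc; [|exact H3|reflexivity]];
  (eapply filter_imp; [|exact H]); intros s E; vs; rewrite E; auto.
Qed.

Lemma VD_ext f g t v v' : (forall s, f s = g s) -> VD f t v -> v = v' -> VD g t v'.
Proof.
  intros H H1 <-. eapply VD_ext_loc; eauto. exists (mkposreal 1 Rlt_0_1). auto.
Qed.

Lemma VD_const (k : V3) t : VD (fun _ => k) t (mkV 0 0 0).
Proof. split; [|split]; apply DRconst. Qed.

Lemma VD_add f g t v w : VD f t v -> VD g t w ->
  VD (fun s => vadd (f s) (g s)) t (vadd v w).
Proof. intros [A1 [A2 A3]] [B1 [B2 B3]]; split; [|split]; vs; apply DRplus; auto. Qed.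

Lemma VD_scal k f t dk v : is_derive k t dk -> VD f t v ->
  VD (fun s => vscal (k s) (f s)) t (vadd (vscal dk (f t)) (vscal (k t) v)).
Proof. intros Hk [A1 [A2 A3]]; split; [|split]; vs; apply DRmult; auto. Qed.

Lemma VD_cross f g t v w : VD f t v -> VD g t w ->
  VD (fun s => cross (f s) (g s)) t (vadd (cross v (g t)) (cross (f t) w)).
Proof.
  intros [H1 [H2 H3]] [G1 [G2 G3]]; split; [|split]; vs;
  (eapply DRext; [intros; reflexivity| apply DRminus; apply DRmult; eauto | vs; ring]).
Qed.

Lemma D_dot f g t v w : VD f t v -> VD g t w ->
  is_derive (fun s => dot (f s) (g s)) t (dot v (g t) + dot (f t) w).
Proof.
  intros [H1 [H2 H3]] [G1 [G2 G3]]. unfold dot.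
  eapply DRext; [intros; reflexivity| apply DRplus; [apply DRplus|]; apply DRmult; eauto | vs; ring].
Qed.

Lemma cramer (T h v : V3) :
  vscal (dot T T * dot h h - dot T h ^ 2) v =
  vadd (vscal (dot v T) (vadd (vscal (dot h h) T) (vscal (- dot T h) h)))
  (vadd (vscal (dot v h) (vadd (vscal (dot T T) h) (vscal (- dot T h) T)))
        (vscal (dot v (cross T h)) (cross T h))).
Proof.
  destruct T as [[t1 t2] t3], h as [[h1 h2] h3], v as [[v1 v2] v3].
  apply V3eq; vx; ring.
Qed.

Lemma frame_decomp (T h v : V3) : dot T T = 1 -> dot h h = 1 -> dot T h = 0 ->
  v = vadd (vscal (dot v T) T) (vadd (vscal (dot v h) h)
        (vscal (dot v (cross T h)) (cross T h))).
Proof.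
  intros H1 H2 H3. pose proof (cramer T h v) as E. rewrite H1, H2, H3 in E.
  set (b := cross T h) in *. set (x := dot v T) in *. set (y := dot v h) in *.
  set (z := dot v b) in *.
  destruct T as [[t1 t2] t3], h as [[h1 h2] h3], v as [[v1 v2] v3], b as [[b1 b2] b3].
  vl. injection E. intros E3 E2 E1. apply V3eq; vl; lra.
Qed.

Ltac toR := try match goal with |- @eq _ ?x ?y => change (@eq R x y) end.
Ltac ring' := toR; ring.
Ltac field' := toR; field.

Lemma EX_of (f : R -> R) x l : is_derive f x l -> ex_derive f x.
Proof. intros H; exists l; exact H. Qed.
Lemma EX_plus (f g : R -> R) x : ex_derive f x -> ex_derive g x -> ex_derive (fun t => f t + g t) x.
Proof. intros [l1 H1] [l2 H2]. eapply EX_of. apply DRplus; eauto. Qed.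
Lemma EX_minus (f g : R -> R) x : ex_derive f x -> ex_derive g x -> ex_derive (fun t => f t - g t) x.
Proof. intros [l1 H1] [l2 H2]. eapply EX_of. apply DRminus; eauto. Qed.
Lemma EX_mult (f g : R -> R) x : ex_derive f x -> ex_derive g x -> ex_derive (fun t => f t * g t) x.
Proof. intros [l1 H1] [l2 H2]. eapply EX_of. apply DRmult; eauto. Qed.
Lemma EX_opp (f : R -> R) x : ex_derive f x -> ex_derive (fun t => - f t) x.
Proof. intros [l1 H1]. eapply EX_of. apply DRopp; eauto. Qed.
Lemma EX_inv (f : R -> R) x : ex_derive f x -> f x <> 0 -> ex_derive (fun t => / f t) x.
Proof. intros [l1 H1] H. eapply EX_of. apply DRinv; eauto. Qed.
Lemma EX_const (k x : R) : ex_derive (fun _ : R => k) x.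
Proof. eapply EX_of. apply DRconst. Qed.

Definition VEX (f : R -> V3) (s : R) : Prop :=
  ex_derive (fun t => c1 (f t)) s /\ ex_derive (fun t => c2 (f t)) s /\
  ex_derive (fun t => c3 (f t)) s.
Lemma VEX_VD f s : VEX f s -> VD f s (vder f s).
Proof. intros [H1 [H2 H3]]. split; [|split]; apply DRex; auto. Qed.
Lemma VD_VEX f s v : VD f s v -> VEX f s.
Proof. intros [H1 [H2 H3]]. split; [|split]; eapply EX_of; eauto. Qed.
Lemma VEX_add f g s : VEX f s -> VEX g s -> VEX (fun t => vadd (f t) (g t)) s.
Proof. intros H1 H2. apply VEX_VD in H1, H2. eapply VD_VEX. apply VD_add; eauto. Qed.
Lemma VEX_scal (k : R -> R) f s : ex_derive k s -> VEX f s -> VEX (fun t => vscal (k t) (f t)) s.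
Proof. intros [l Hk] H2. apply VEX_VD in H2. eapply VD_VEX. apply VD_scal; eauto. Qed.
Lemma VEX_cross f g s : VEX f s -> VEX g s -> VEX (fun t => cross (f t) (g t)) s.
Proof. intros H1 H2. apply VEX_VD in H1, H2. eapply VD_VEX. apply VD_cross; eauto. Qed.
Lemma EX_dot f g s : VEX f s -> VEX g s -> ex_derive (fun t => dot (f t) (g t)) s.
Proof. intros H1 H2. apply VEX_VD in H1, H2. eapply EX_of. apply D_dot; eauto. Qed.
Lemma VEX_ext_loc f g s : locally s (fun t => f t = g t) -> VEX f s -> VEX g s.
Proof. intros H H1. apply VEX_VD in H1. eapply VD_VEX. eapply VD_ext_loc; eauto. Qed.
Lemma EX_ext_loc (f g : R -> R) s : locally s (fun t => f t = g t) -> ex_derive f s -> ex_derive g s.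
Proof. intros H H1. apply (ex_derive_ext_loc f g s H H1). Qed.

Lemma D_const_loc (f : R -> R) x k l : locally x (fun t => f t = k) -> is_derive f x l -> l = 0.
Proof.
  intros H H1. apply (D_zero_loc (fun t => f t - k) x l).
  - eapply filter_imp; [|exact H]. intros t E; simpl; rewrite E; ring.
  - eapply DRext; [intros; reflexivity| apply DRminus; [exact H1| apply DRconst] | ring].
Qed.

Lemma dot_comm v w : dot v w = dot w v.
Proof. unfold dot; ring. Qed.
Lemma dot_ge0 v : 0 <= dot v v.
Proof. destruct v as [[x y] z]; vx; nra. Qed.
Lemma sqrt_pos_inv x : 0 < sqrt x -> 0 < x.
Proof. intros H. destruct (Rle_or_lt x 0) as [H1|H1]; auto. rewrite sqrt_neg_0 in H; lra. Qed.

Section Curve.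
Variable a : R -> V3.
Variables al be r : R.
Hypothesis Hsm : smooth_curve a al be.
Hypothesis Hunit : forall u, al < u < be -> vnorm (vder a u) = 1.
Hypothesis Hkp : forall u, al < u < be -> 0 < curvature a u.

Definition T s := vder a s.
Definition A2 s := vder (vder a) s.
Definition A3 s := vder (vder (vder a)) s.
Definition A4 s := vder (vder (vder (vder a))) s.
Definition kap s := curvature a s.
Definition K1 s := dot (A2 s) (A3 s) / kap s.
Definition hh s := vscal (/ kap s) (A2 s).
Definition hd s := vadd (vscal (- K1 s / kap s ^ 2) (A2 s)) (vscal (/ kap s) (A3 s)).
Definition bb s := cross (T s) (hh s).
Definition bd s := vadd (cross (A2 s) (hh s)) (cross (T s) (hd s)).
Definition tau s := dot (hd s) (bb s).

Lemma VEX_a s : al < s < be -> VEX a s.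
Proof. destruct Hsm as [H1 [H2 H3]]; intros Hs; split; [|split];
  [exact (H1 0%nat s Hs)|exact (H2 0%nat s Hs)|exact (H3 0%nat s Hs)]. Qed.
Lemma VEX_T s : al < s < be -> VEX T s.
Proof. destruct Hsm as [H1 [H2 H3]]; intros Hs; split; [|split];
  [exact (H1 1%nat s Hs)|exact (H2 1%nat s Hs)|exact (H3 1%nat s Hs)]. Qed.
Lemma VEX_A2 s : al < s < be -> VEX A2 s.
Proof. destruct Hsm as [H1 [H2 H3]]; intros Hs; split; [|split];
  [exact (H1 2%nat s Hs)|exact (H2 2%nat s Hs)|exact (H3 2%nat s Hs)]. Qed.
Lemma VEX_A3 s : al < s < be -> VEX A3 s.
Proof. destruct Hsm as [H1 [H2 H3]]; intros Hs; split; [|split];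
  [exact (H1 3%nat s Hs)|exact (H2 3%nat s Hs)|exact (H3 3%nat s Hs)]. Qed.

Lemma VD_a s : al < s < be -> VD a s (T s).
Proof. intros Hs; exact (VEX_VD _ _ (VEX_a s Hs)). Qed.
Lemma VD_T s : al < s < be -> VD T s (A2 s).
Proof. intros Hs; exact (VEX_VD _ _ (VEX_T s Hs)). Qed.
Lemma VD_A2 s : al < s < be -> VD A2 s (A3 s).
Proof. intros Hs; exact (VEX_VD _ _ (VEX_A2 s Hs)). Qed.
Lemma VD_A3 s : al < s < be -> VD A3 s (A4 s).
Proof. intros Hs; exact (VEX_VD _ _ (VEX_A3 s Hs)). Qed.

Lemma kap_pos s : al < s < be -> 0 < kap s.
Proof. apply Hkp. Qed.
Lemma kap_sq s : al < s < be -> kap s * kap s = dot (A2 s) (A2 s).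
Proof. intros Hs. unfold kap, curvature, vnorm. apply sqrt_sqrt. apply dot_ge0. Qed.

Lemma D_kap s : al < s < be -> is_derive kap s (K1 s).
Proof.
  intros Hs. pose proof (kap_pos s Hs) as Hk.
  assert (Hd : 0 < dot (A2 s) (A2 s)) by (rewrite <- kap_sq; auto; nra).
  eapply DRext; [intros; reflexivity| apply DRsqrt; [apply D_dot; apply VD_A2; auto| exact Hd] |].
  change (vder (vder a) s) with (A2 s). change (sqrt (dot (A2 s) (A2 s))) with (kap s).
  unfold K1. replace (sqrt (dot (vder (vder a) s) (vder (vder a) s))) with (kap s) by reflexivity.
  rewrite (dot_comm (A3 s)). field. lra.
Qed.

Lemma EX_kap s : al < s < be -> ex_derive kap s.
Proof. intros Hs; eapply EX_of; apply D_kap; auto. Qed.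

Lemma EX_K1 s : al < s < be -> ex_derive K1 s.
Proof.
  intros Hs. unfold K1, Rdiv. apply EX_mult.
  - apply EX_dot; [apply VEX_A2|apply VEX_A3]; auto.
  - apply EX_inv; [apply EX_kap; auto| pose proof (kap_pos s Hs); lra].
Qed.

Lemma VD_hh s : al < s < be -> VD hh s (hd s).
Proof.
  intros Hs. pose proof (kap_pos s Hs) as Hk.
  apply (VD_scal (fun t => / kap t) A2).
  - apply DRinv; [apply D_kap; auto| lra].
  - apply VD_A2; auto.
Qed.

Lemma VEX_hh s : al < s < be -> VEX hh s.
Proof. intros Hs; eapply VD_VEX; apply VD_hh; auto. Qed.

Lemma VEX_hd s : al < s < be -> VEX hd s.
Proof.
  intros Hs. pose proof (kap_pos s Hs) as Hk. unfold hd.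
  apply VEX_add; apply VEX_scal.
  - unfold Rdiv. apply EX_mult. apply EX_opp, EX_K1; auto.
    apply EX_inv. eapply EX_ext_loc with (fun t => kap t * kap t).
    exists (mkposreal 1 Rlt_0_1); intros; simpl; ring.
    apply EX_mult; apply EX_kap; auto. simpl. nra.
  - apply VEX_A2; auto.
  - apply EX_inv; [apply EX_kap; auto| lra].
  - apply VEX_A3; auto.
Qed.

Lemma VD_bb s : al < s < be -> VD bb s (bd s).
Proof. intros Hs. apply (VD_cross T hh). apply VD_T; auto. apply VD_hh; auto. Qed.

Lemma VEX_bb s : al < s < be -> VEX bb s.
Proof. intros Hs; eapply VD_VEX; apply VD_bb; auto. Qed.

Lemma EX_tau s : al < s < be -> ex_derive tau s.
Proof. intros Hs. apply EX_dot. apply VEX_hd; auto. apply VEX_bb; auto. Qed.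

Lemma HTT s : al < s < be -> dot (T s) (T s) = 1.
Proof.
  intros Hs. pose proof (Hunit s Hs) as H. unfold vnorm in H. fold (T s) in H.
  rewrite <- (sqrt_sqrt (dot (T s) (T s))) by apply dot_ge0. rewrite H; ring.
Qed.

Lemma HTA2 s : al < s < be -> dot (T s) (A2 s) = 0.
Proof.
  intros Hs.
  assert (L : dot (A2 s) (T s) + dot (T s) (A2 s) = 0).
  { apply (D_const_loc (fun t => dot (T t) (T t)) s 1). eapply filter_imp; [|apply (loc_interval al be s Hs)].
    intros t Ht; apply HTT; auto.
    apply D_dot; apply VD_T; auto. }
  rewrite dot_comm in L. lra.
Qed.

Lemma HA2 s : al < s < be -> A2 s = vscal (kap s) (hh s).
Proof.
  intros Hs. pose proof (kap_pos s Hs). unfold hh.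
  destruct (A2 s) as [[x y] z]. apply V3eq; vx; field; lra.
Qed.

Lemma Hhh s : al < s < be -> dot (hh s) (hh s) = 1.
Proof.
  intros Hs. pose proof (kap_pos s Hs). pose proof (kap_sq s Hs) as E. unfold hh.
  replace (dot (vscal (/ kap s) (A2 s)) (vscal (/ kap s) (A2 s))) with
    (/ kap s * / kap s * dot (A2 s) (A2 s)) by (vx; ring).
  rewrite <- E. field. lra.
Qed.

Lemma HTh s : al < s < be -> dot (T s) (hh s) = 0.
Proof.
  intros Hs. unfold hh.
  replace (dot (T s) (vscal (/ kap s) (A2 s))) with (/ kap s * dot (T s) (A2 s)) by (vx; ring).
  rewrite HTA2; auto; ring.
Qed.

Lemma HhA2 s : al < s < be -> dot (hh s) (A2 s) = kap s.
Proof.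
  intros Hs. pose proof (kap_pos s Hs). rewrite (HA2 s Hs).
  replace (dot (hh s) (vscal (kap s) (hh s))) with (kap s * dot (hh s) (hh s)) by (vx; ring).
  rewrite Hhh; auto; ring.
Qed.

Lemma Hhd_T s : al < s < be -> dot (hd s) (T s) = - kap s.
Proof.
  intros Hs.
  assert (L : dot (hd s) (T s) + dot (hh s) (A2 s) = 0).
  { apply (D_const_loc (fun t => dot (hh t) (T t)) s 0).
    eapply filter_imp; [|apply (loc_interval al be s Hs)].
    intros t Ht; rewrite dot_comm; apply HTh; auto.
    apply D_dot. apply VD_hh; auto. apply VD_T; auto. }
  rewrite HhA2 in L; auto. lra.
Qed.

Lemma Hhd_h s : al < s < be -> dot (hd s) (hh s) = 0.
Proof.
  intros Hs.
  assert (L : dot (hd s) (hh s) + dot (hh s) (hd s) = 0).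
  { apply (D_const_loc (fun t => dot (hh t) (hh t)) s 1).
    eapply filter_imp; [|apply (loc_interval al be s Hs)].
    intros t Ht; apply Hhh; auto.
    apply D_dot; apply VD_hh; auto. }
  rewrite (dot_comm (hh s)) in L. lra.
Qed.

Lemma Hhd s : al < s < be -> hd s = vadd (vscal (- kap s) (T s)) (vscal (tau s) (bb s)).
Proof.
  intros Hs. rewrite (frame_decomp (T s) (hh s) (hd s)) at 1; try apply HTT; try apply Hhh;
  try apply HTh; auto.
  rewrite Hhd_T, Hhd_h by auto. fold (bb s). fold (tau s).
  destruct (T s) as [[? ?] ?], (hh s) as [[? ?] ?], (bb s) as [[? ?] ?]. apply V3eq; vx; ring.
Qed.

Lemma Hbd s : al < s < be -> bd s = vscal (- tau s) (hh s).
Proof.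
  intros Hs. unfold bd. rewrite HA2, Hhd by auto.
  pose proof (HTT s Hs) as H1. pose proof (HTh s Hs) as H2. unfold bb.
  generalize (T s) (hh s) (kap s) (tau s) H1 H2. clear.
  intros T h k tau H1 H2.
  assert (E: cross T (cross T h) = vadd (vscal (dot T h) T) (vscal (- dot T T) h)).
  { destruct T as [[? ?] ?], h as [[? ?] ?]; apply V3eq; vx; ring. }
  rewrite H1, H2 in E.
  assert (E2: cross T (vadd (vscal (-k) T) (vscal tau (cross T h))) = vscal tau (cross T (cross T h))).
  { destruct T as [[? ?] ?], h as [[? ?] ?]; apply V3eq; vx; ring. }
  rewrite E2, E. destruct T as [[? ?] ?], h as [[? ?] ?]; apply V3eq; vx; ring.
Qed.

Lemma Hhb s : al < s < be -> dot (hh s) (bb s) = 0.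
Proof. intros Hs. unfold bb. destruct (T s) as [[? ?] ?], (hh s) as [[? ?] ?]; vx; ring. Qed.
Lemma HTb s : al < s < be -> dot (T s) (bb s) = 0.
Proof. intros Hs. unfold bb. destruct (T s) as [[? ?] ?], (hh s) as [[? ?] ?]; vx; ring. Qed.
Lemma Hbb s : al < s < be -> dot (bb s) (bb s) = 1.
Proof.
  intros Hs. unfold bb. pose proof (HTT s Hs) as H1. pose proof (Hhh s Hs) as H2.
  pose proof (HTh s Hs) as H3.
  assert (E : dot (cross (T s) (hh s)) (cross (T s) (hh s)) =
     dot (T s) (T s) * dot (hh s) (hh s) - dot (T s) (hh s) ^ 2).
  { destruct (T s) as [[? ?] ?], (hh s) as [[? ?] ?]; vx; ring. }
  rewrite E, H1, H2, H3; ring.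
Qed.


Hypothesis Hr : 0 < r.
Hypothesis Hrk : forall u, al < u < be -> r < / curvature a u.

Notation X := (tube a r).
Definition nn s q := vadd (vscal (cos q) (hh s)) (vscal (sin q) (bb s)).
Definition mm s q := vadd (vscal (- sin q) (hh s)) (vscal (cos q) (bb s)).
Definition del s q := 1 - r * kap s * cos q.
Definition XU s q := vadd (vscal (del s q) (T s)) (vscal (r * tau s) (mm s q)).
Definition FR s x y z := vadd (vscal x (T s)) (vadd (vscal y (hh s)) (vscal z (bb s))).
Definition DD s q := - (r * del s q * kap s * cos q).

Lemma sc1 q : 0 * 0 + cos q * cos q + sin q * sin q = 1.
Proof. pose proof (sin2_cos2 q) as H. unfold Rsqr in H. lra. Qed.
Lemma sc1' q : cos q * cos q + sin q * sin q = 1.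
Proof. pose proof (sin2_cos2 q) as H. unfold Rsqr in H. lra. Qed.

Lemma rk_lt1 s : al < s < be -> r * kap s < 1.
Proof.
  intros Hs. pose proof (kap_pos s Hs) as Hk0. pose proof (Hrk s Hs) as Hq.
  apply (Rmult_lt_compat_r (kap s)) in Hq; auto. rewrite Rinv_l in Hq; [|lra]. exact Hq.
Qed.

Lemma del_pos s q : al < s < be -> 0 < del s q.
Proof.
  intros Hs. pose proof (rk_lt1 s Hs). pose proof (kap_pos s Hs).
  pose proof (COS_bound q). unfold del.
  assert (0 < r * kap s) by (apply Rmult_lt_0_compat; auto). nra.
Qed.

Lemma FR_dot s x1 y1 z1 x2 y2 z2 : al < s < be ->
  dot (FR s x1 y1 z1) (FR s x2 y2 z2) = x1 * x2 + y1 * y2 + z1 * z2.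
Proof.
  intros Hs.
  assert (E : dot (FR s x1 y1 z1) (FR s x2 y2 z2) =
    x1 * x2 * dot (T s) (T s) + y1 * y2 * dot (hh s) (hh s) + z1 * z2 * dot (bb s) (bb s)
    + (x1 * y2 + y1 * x2) * dot (T s) (hh s) + (x1 * z2 + z1 * x2) * dot (T s) (bb s)
    + (y1 * z2 + z1 * y2) * dot (hh s) (bb s)).
  { unfold FR. destruct (T s) as [[? ?] ?], (hh s) as [[? ?] ?], (bb s) as [[? ?] ?]. vx; ring. }
  rewrite E, HTT, Hhh, Hbb, HTh, HTb, Hhb by auto. ring.
Qed.

Lemma L1 s q : al < s < be -> du X s q = XU s q.
Proof.
  intros Hs. unfold du. apply VD_vder.
  eapply (VD_ext (fun t => vadd (a t) (vadd (vscal (r * cos q) (hh t)) (vscal (r * sin q) (bb t))))).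
  { intros; reflexivity. }
  { apply VD_add. apply VD_a; auto.
    apply (VD_add (fun t => vscal (r * cos q) (hh t)) (fun t => vscal (r * sin q) (bb t))).
    apply (VD_scal (fun _ => r * cos q) hh). apply DRconst. apply VD_hh; auto.
    apply (VD_scal (fun _ => r * sin q) bb). apply DRconst. apply VD_bb; auto. }
  rewrite Hhd, Hbd by auto. unfold XU, mm, del.
  destruct (T s) as [[? ?] ?], (hh s) as [[? ?] ?], (bb s) as [[? ?] ?]. apply V3eq; vx; ring.
Qed.

Lemma L2 s q : dp X s q = vscal r (mm s q).
Proof.
  unfold dp. apply VD_vder.
  eapply (VD_ext (fun t => vadd (a s) (vadd (vscal (r * cos t) (hh s)) (vscal (r * sin t) (bb s))))).
  { intros; reflexivity. }
  { apply (VD_add (fun _ => a s)). apply VD_const.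
    apply (VD_add (fun t => vscal (r * cos t) (hh s)) (fun t => vscal (r * sin t) (bb s))).
    apply (VD_scal (fun t => r * cos t) (fun _ => hh s)).
    apply DRmult. apply DRconst. apply DRcos. apply VD_const.
    apply (VD_scal (fun t => r * sin t) (fun _ => bb s)).
    apply DRmult. apply DRconst. apply DRsin. apply VD_const. }
  unfold mm. destruct (a s) as [[? ?] ?], (hh s) as [[? ?] ?], (bb s) as [[? ?] ?].
  apply V3eq; vx; ring.
Qed.

Lemma cross_TT s : al < s < be -> cross (T s) (bb s) = vscal (-1) (hh s).
Proof.
  intros Hs.
  assert (E: cross (T s) (bb s) = vadd (vscal (dot (T s) (hh s)) (T s)) (vscal (- dot (T s) (T s)) (hh s))).
  { unfold bb. destruct (T s) as [[? ?] ?], (hh s) as [[? ?] ?]; apply V3eq; vx; ring. }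
  rewrite E, HTT, HTh by auto.
  destruct (T s) as [[? ?] ?], (hh s) as [[? ?] ?]; apply V3eq; vx; ring.
Qed.

Lemma nn_FR s q : nn s q = FR s 0 (cos q) (sin q).
Proof. unfold nn, FR. destruct (T s) as [[? ?] ?], (hh s) as [[? ?] ?], (bb s) as [[? ?] ?]. apply V3eq; vx; ring. Qed.
Lemma mm_FR s q : mm s q = FR s 0 (- sin q) (cos q).
Proof. unfold mm, FR. destruct (T s) as [[? ?] ?], (hh s) as [[? ?] ?], (bb s) as [[? ?] ?]. apply V3eq; vx; ring. Qed.

Lemma L3 s q : al < s < be -> gauss X s q = vscal (-1) (nn s q).
Proof.
  intros Hs. unfold gauss. rewrite L1, L2 by auto.
  assert (E1 : cross (XU s q) (vscal r (mm s q)) =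
     vadd (vscal (del s q * r * - sin q) (bb s)) (vscal (del s q * r * cos q) (cross (T s) (bb s)))).
  { unfold XU, mm, bb. destruct (T s) as [[? ?] ?], (hh s) as [[? ?] ?]. apply V3eq; vx; ring. }
  rewrite cross_TT in E1 by auto.
  assert (E2 : cross (XU s q) (vscal r (mm s q)) = vscal (- (r * del s q)) (nn s q)).
  { rewrite E1. unfold nn. destruct (hh s) as [[? ?] ?], (bb s) as [[? ?] ?]. apply V3eq; vx; ring. }
  rewrite E2. cbv zeta.
  assert (E3 : vnorm (vscal (- (r * del s q)) (nn s q)) = r * del s q).
  { unfold vnorm.
    replace (dot (vscal (- (r * del s q)) (nn s q)) (vscal (- (r * del s q)) (nn s q)))
      with ((r * del s q) ^ 2 * dot (nn s q) (nn s q)) by (vx; ring).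
    rewrite nn_FR, FR_dot by auto.
    replace ((r * del s q) ^ 2 * (0 * 0 + cos q * cos q + sin q * sin q)) with
      ((r * del s q) * (r * del s q)) by (rewrite (sc1 q); ring).
    apply sqrt_square. pose proof (del_pos s q Hs). nra. }
  rewrite E3. pose proof (del_pos s q Hs).
  destruct (nn s q) as [[? ?] ?]. apply V3eq; vx; field; nra.
Qed.

Lemma EX_del_s s q : al < s < be -> ex_derive (fun t => del t q) s.
Proof.
  intros Hs. unfold del. apply EX_minus. apply EX_const.
  apply EX_mult. apply EX_mult. apply EX_const. apply EX_kap; auto. apply EX_const.
Qed.

Lemma VD_mm_s s q : al < s < be ->
  VD (fun t => mm t q) s (vadd (vscal (kap s * sin q) (T s)) (vscal (- tau s) (nn s q))).
Proof.
  intros Hs. eapply VD_ext. intros; reflexivity.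
  apply (VD_add (fun t => vscal (- sin q) (hh t)) (fun t => vscal (cos q) (bb t))).
  apply (VD_scal (fun _ => - sin q) hh). apply DRconst. apply VD_hh; auto.
  apply (VD_scal (fun _ => cos q) bb). apply DRconst. apply VD_bb; auto.
  rewrite Hhd, Hbd by auto. unfold nn.
  destruct (T s) as [[? ?] ?], (hh s) as [[? ?] ?], (bb s) as [[? ?] ?]. apply V3eq; vx; ring'.
Qed.

Lemma VD_nn_s s q : al < s < be ->
  VD (fun t => nn t q) s (vadd (vscal (- kap s * cos q) (T s)) (vscal (tau s) (mm s q))).
Proof.
  intros Hs. eapply VD_ext. intros; reflexivity.
  apply (VD_add (fun t => vscal (cos q) (hh t)) (fun t => vscal (sin q) (bb t))).
  apply (VD_scal (fun _ => cos q) hh). apply DRconst. apply VD_hh; auto.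
  apply (VD_scal (fun _ => sin q) bb). apply DRconst. apply VD_bb; auto.
  rewrite Hhd, Hbd by auto. unfold mm.
  destruct (T s) as [[? ?] ?], (hh s) as [[? ?] ?], (bb s) as [[? ?] ?]. apply V3eq; vx; ring'.
Qed.

Lemma VD_mm_q s q : VD (fun t => mm s t) q (vscal (-1) (nn s q)).
Proof.
  eapply VD_ext. intros; reflexivity.
  apply (VD_add (fun t => vscal (- sin t) (hh s)) (fun t => vscal (cos t) (bb s))).
  apply (VD_scal (fun t => - sin t) (fun _ => hh s)). apply DRopp, DRsin. apply VD_const.
  apply (VD_scal (fun t => cos t) (fun _ => bb s)). apply DRcos. apply VD_const.
  unfold nn. destruct (hh s) as [[? ?] ?], (bb s) as [[? ?] ?]. apply V3eq; vx; ring'.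
Qed.

Lemma VD_nn_q s q : VD (fun t => nn s t) q (mm s q).
Proof.
  eapply VD_ext. intros; reflexivity.
  apply (VD_add (fun t => vscal (cos t) (hh s)) (fun t => vscal (sin t) (bb s))).
  apply (VD_scal (fun t => cos t) (fun _ => hh s)). apply DRcos. apply VD_const.
  apply (VD_scal (fun t => sin t) (fun _ => bb s)). apply DRsin. apply VD_const.
  unfold mm. destruct (hh s) as [[? ?] ?], (bb s) as [[? ?] ?]. apply V3eq; vx; ring'.
Qed.

Lemma LIIL s q : al < s < be -> IIL X s q = r * tau s ^ 2 - del s q * kap s * cos q.
Proof.
  intros Hs. unfold IIL. rewrite L3 by auto. unfold du at 1.
  destruct (EX_del_s s q Hs) as [d1 Hd1]. destruct (EX_tau s Hs) as [d2 Hd2].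
  erewrite VD_vder.
  2:{ eapply VD_ext_loc.
      { eapply filter_imp; [|apply (loc_interval al be s Hs)].
        intros t Ht. simpl. symmetry. apply L1; auto. }
      unfold XU.
      apply (VD_add (fun t => vscal (del t q) (T t)) (fun t => vscal (r * tau t) (mm t q))).
      apply (VD_scal (fun t => del t q) T). exact Hd1. apply VD_T; auto.
      apply (VD_scal (fun t => r * tau t) (fun t => mm t q)).
      apply DRmult. apply DRconst. exact Hd2. apply VD_mm_s; auto. }
  rewrite HA2 by auto.
  match goal with |- dot ?V _ = _ => replace V with (FR s (d1 + r * tau s * kap s * sin q)
              (del s q * kap s - r * d2 * sin q - r * tau s * tau s * cos q)
              (r * d2 * cos q - r * tau s * tau s * sin q)) end.
  2:{ unfold FR, mm, nn. destruct (T s) as [[? ?] ?], (hh s) as [[? ?] ?], (bb s) as [[? ?] ?].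
      apply V3eq; vx; ring'. }
  replace (vscal (-1) (nn s q)) with (FR s 0 (- cos q) (- sin q)).
  2:{ unfold FR, nn. destruct (T s) as [[? ?] ?], (hh s) as [[? ?] ?], (bb s) as [[? ?] ?].
      apply V3eq; vx; ring'. }
  rewrite FR_dot by auto. pose proof (sc1' q).
  transitivity (- del s q * kap s * cos q + r * tau s * tau s * (cos q * cos q + sin q * sin q)).
  ring. rewrite H; ring.
Qed.

Lemma LIIM s q : al < s < be -> IIM X s q = r * tau s.
Proof.
  intros Hs. unfold IIM. rewrite L3 by auto. unfold dp at 1.
  erewrite VD_vder.
  2:{ eapply (VD_ext (fun t => XU s t)). intros t; symmetry; apply L1; auto.
      unfold XU.
      apply (VD_add (fun t => vscal (del s t) (T s)) (fun t => vscal (r * tau s) (mm s t))).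
      apply (VD_scal (fun t => del s t) (fun _ => T s)).
      { unfold del. apply DRminus. apply DRconst. apply DRmult. apply DRconst. apply DRcos. }
      apply VD_const.
      apply (VD_scal (fun _ => r * tau s) (fun t => mm s t)). apply DRconst. apply VD_mm_q.
      reflexivity. }
  match goal with |- dot ?V _ = _ => replace V with
    (FR s (r * kap s * sin q) (- (r * tau s) * cos q) (- (r * tau s) * sin q)) end.
  2:{ unfold FR, nn. destruct (T s) as [[? ?] ?], (hh s) as [[? ?] ?], (bb s) as [[? ?] ?].
      apply V3eq; vx; ring'. }
  replace (vscal (-1) (nn s q)) with (FR s 0 (- cos q) (- sin q)).
  2:{ unfold FR, nn. destruct (T s) as [[? ?] ?], (hh s) as [[? ?] ?], (bb s) as [[? ?] ?].
      apply V3eq; vx; ring'. }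
  rewrite FR_dot by auto. pose proof (sc1' q).
  transitivity (r * tau s * (cos q * cos q + sin q * sin q)). ring. rewrite H; ring.
Qed.

Lemma LIIN s q : al < s < be -> IIN X s q = r.
Proof.
  intros Hs. unfold IIN. rewrite L3 by auto. unfold dp at 1.
  erewrite VD_vder.
  2:{ eapply (VD_ext (fun t => vscal r (mm s t))). intros t; symmetry; apply L2.
      apply (VD_scal (fun _ => r) (fun t => mm s t)). apply DRconst. apply VD_mm_q.
      reflexivity. }
  match goal with |- dot ?V _ = _ => replace V with (FR s 0 (- r * cos q) (- r * sin q)) end.
  2:{ unfold FR, nn. destruct (T s) as [[? ?] ?], (hh s) as [[? ?] ?], (bb s) as [[? ?] ?].
      apply V3eq; vx; ring'. }
  replace (vscal (-1) (nn s q)) with (FR s 0 (- cos q) (- sin q)).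
  2:{ unfold FR, nn. destruct (T s) as [[? ?] ?], (hh s) as [[? ?] ?], (bb s) as [[? ?] ?].
      apply V3eq; vx; ring'. }
  rewrite FR_dot by auto. pose proof (sc1' q).
  transitivity (r * (cos q * cos q + sin q * sin q)). ring. rewrite H; ring.
Qed.

Lemma Ldet s q : al < s < be -> detII X s q = DD s q.
Proof. intros Hs. unfold detII, DD. rewrite LIIL, LIIM, LIIN by auto. ring. Qed.

Lemma VD_gauss_s s q : al < s < be ->
  VD (fun t => gauss X t q) s (vadd (vscal (kap s * cos q) (T s)) (vscal (- tau s) (mm s q))).
Proof.
  intros Hs. eapply VD_ext_loc.
  { eapply filter_imp; [|apply (loc_interval al be s Hs)].
    intros t Ht. simpl. symmetry. apply L3; auto. }
  eapply VD_ext. intros; reflexivity.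
  apply (VD_scal (fun _ => -1) (fun t => nn t q)). apply DRconst. apply VD_nn_s; auto.
  unfold mm. destruct (T s) as [[? ?] ?], (hh s) as [[? ?] ?], (bb s) as [[? ?] ?], (nn s q) as [[? ?] ?].
  apply V3eq; vx; ring'.
Qed.

Lemma VD_gauss_q s q : al < s < be -> VD (fun t => gauss X s t) q (vscal (-1) (mm s q)).
Proof.
  intros Hs. eapply (VD_ext (fun t => vscal (-1) (nn s t))). intros t; symmetry; apply L3; auto.
  apply (VD_scal (fun _ => -1) (fun t => nn s t)). apply DRconst. apply VD_nn_q.
  destruct (mm s q) as [[? ?] ?], (nn s q) as [[? ?] ?]. apply V3eq; vx; ring'.
Qed.

Lemma EX_sqrt (f : R -> R) x : ex_derive f x -> 0 < f x -> ex_derive (fun t => sqrt (f t)) x.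
Proof. intros [l H1] H. eapply EX_of. apply DRsqrt; eauto. Qed.
Lemma EX_abs (f : R -> R) x : ex_derive f x -> f x <> 0 -> ex_derive (fun t => Rabs (f t)) x.
Proof. intros [l H1] H. eapply EX_of. apply DRabs; eauto. Qed.

Definition Om p t := - sqrt (Rabs (DD t p)) / del t p.
Definition Wq u q := sqrt (Rabs (DD u q)).
Definition inner u q := vadd (vscal (tau u / del u q) (T u)) (vscal (- / r) (mm u q)).
Definition D1 u p := vder (fun t => vscal (Om p t) (T t)) u.
Definition D2 u p := vder (fun q => vscal (Wq u q) (inner u q)) p.
Definition DDp u q := r * kap u * sin q * (1 - 2 * r * kap u * cos q).

Lemma DD_neq0 s q : al < s < be -> cos q <> 0 -> DD s q <> 0.
Proof.
  intros Hs Hc. pose proof (del_pos s q Hs). pose proof (kap_pos s Hs). unfold DD.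
  apply Ropp_neq_0_compat. repeat apply Rmult_integral_contrapositive_currified; lra.
Qed.

Lemma EX_DD_s s p : al < s < be -> ex_derive (fun t => DD t p) s.
Proof.
  intros Hs. unfold DD. apply EX_opp. apply EX_mult; [|apply EX_const].
  apply EX_mult; [|apply EX_kap; auto]. apply EX_mult; [apply EX_const|]. apply EX_del_s; auto.
Qed.

Lemma EX_Om s p : al < s < be -> cos p <> 0 -> ex_derive (Om p) s.
Proof.
  intros Hs Hc. unfold Om, Rdiv. apply EX_mult.
  - apply EX_opp. apply EX_sqrt. apply EX_abs. apply EX_DD_s; auto. apply DD_neq0; auto.
    apply Rabs_pos_lt. apply DD_neq0; auto.
  - apply EX_inv. apply EX_del_s; auto. pose proof (del_pos s p Hs); lra.
Qed.

Lemma D_DD_q s q : is_derive (fun t => DD s t) q (DDp s q).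
Proof. unfold DD, del, DDp. auto_derive. auto. ring'. Qed.

Lemma D_Wq s q : al < s < be -> cos q <> 0 ->
  is_derive (Wq s) q (sign (DD s q) * DDp s q / (2 * sqrt (Rabs (DD s q)))).
Proof.
  intros Hs Hc. unfold Wq. apply (DRsqrt (fun t => Rabs (DD s t))). apply (DRabs (fun t => DD s t)). apply D_DD_q. apply DD_neq0; auto.
  apply Rabs_pos_lt. apply DD_neq0; auto.
Qed.

Lemma EX_taudel s q : al < s < be -> ex_derive (fun t => tau s / del s t) q.
Proof.
  intros Hs. unfold Rdiv. apply EX_mult. apply EX_const. apply EX_inv.
  unfold del. eapply EX_of. apply DRminus. apply DRconst. apply DRmult. apply DRconst. apply DRcos.
  pose proof (del_pos s q Hs); lra.
Qed.

Lemma VD_inner s q : al < s < be -> forall dT, is_derive (fun t => tau s / del s t) q dT ->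
  VD (fun t => inner s t) q
   (vadd (vadd (vscal dT (T s)) (vscal (tau s / del s q) (mkV 0 0 0)))
         (vadd (vscal 0 (mm s q)) (vscal (- / r) (vscal (-1) (nn s q))))).
Proof.
  intros Hs dT HdT. unfold inner.
  apply (VD_add (fun t => vscal (tau s / del s t) (T s)) (fun t => vscal (- / r) (mm s t))).
  apply (VD_scal (fun t => tau s / del s t) (fun _ => T s)). exact HdT. apply VD_const.
  apply (VD_scal (fun _ => - / r) (fun t => mm s t)). apply DRconst. apply VD_mm_q.
Qed.

Definition is_proj (pr : V3 -> R) : Prop :=
  (forall v w, pr (vadd v w) = pr v + pr w) /\ (forall k v, pr (vscal k v) = k * pr v) /\
  (forall F t v, VD F t v -> is_derive (fun s => pr (F s)) t (pr v)).

Lemma proj_c1 : is_proj c1.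
Proof. split; [|split]. intros; reflexivity. intros; reflexivity. intros F t v [H _]; exact H. Qed.
Lemma proj_c2 : is_proj c2.
Proof. split; [|split]. intros; reflexivity. intros; reflexivity. intros F t v [_ [H _]]; exact H. Qed.
Lemma proj_c3 : is_proj c3.
Proof. split; [|split]. intros; reflexivity. intros; reflexivity. intros F t v [_ [_ H]]; exact H. Qed.

Lemma VEX_Phi1 u p : al < u < be -> cos p <> 0 -> VEX (fun t => vscal (Om p t) (T t)) u.
Proof.
  intros Hs Hc. apply VEX_scal. apply EX_Om; auto. apply VEX_T; auto.
Qed.

Lemma VEX_Phi2 u p : al < u < be -> cos p <> 0 -> VEX (fun q => vscal (Wq u q) (inner u q)) p.
Proof.
  intros Hs Hc. apply VEX_scal. eapply EX_of. apply D_Wq; auto.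
  destruct (EX_taudel u p Hs) as [dT HdT]. eapply VD_VEX. apply VD_inner; eauto.
Qed.

Lemma LAP pr u p : is_proj pr -> al < u < be -> cos p <> 0 ->
  laplaceII X (fun s q => pr (gauss X s q)) u p = - / Wq u p * (pr (D1 u p) + pr (D2 u p)).
Proof.
  intros [Hadd [Hsc Hder]] Hu Hc. unfold laplaceII. cbv zeta beta.
  replace (sqrt (Rabs (detII X u p))) with (Wq u p) by (unfold Wq; rewrite Ldet; auto).
  f_equal. f_equal.
  - transitivity (Derive (fun t => pr (vscal (Om p t) (T t))) u).
    + apply Derive_ext_loc. eapply filter_imp; [|apply (loc_interval al be u Hu)].
      intros t Ht. simpl.
      rewrite Ldet, LIIN, LIIM by auto. unfold pu, pp.
      replace (Derive (fun s : R => pr (gauss X s p)) t) with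
        (pr (vadd (vscal (kap t * cos p) (T t)) (vscal (- tau t) (mm t p))))
        by (symmetry; apply DRval; apply Hder; apply VD_gauss_s; auto).
      replace (Derive (fun q : R => pr (gauss X t q)) p) with (pr (vscal (-1) (mm t p)))
        by (symmetry; apply DRval; apply Hder; apply VD_gauss_q; auto).
      unfold mm; repeat (rewrite Hadd || rewrite Hsc). unfold Om, DD.
      pose proof (del_pos t p Ht). pose proof (kap_pos t Ht).
      field'. repeat split; lra.
    + apply DRval. apply Hder. unfold D1. apply VEX_VD. apply VEX_Phi1; auto.
  - transitivity (Derive (fun q => pr (vscal (Wq u q) (inner u q))) p).
    + apply Derive_ext_loc.
      eapply filter_imp; [|apply (loc_neq0 cos p (continuity_cos p) Hc)].
      intros q Hq. simpl.
      rewrite Ldet, LIIL, LIIM by auto. unfold pu, pp.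
      replace (Derive (fun s : R => pr (gauss X s q)) u) with
        (pr (vadd (vscal (kap u * cos q) (T u)) (vscal (- tau u) (mm u q))))
        by (symmetry; apply DRval; apply Hder; apply VD_gauss_s; auto).
      replace (Derive (fun q0 : R => pr (gauss X u q0)) q) with (pr (vscal (-1) (mm u q)))
        by (symmetry; apply DRval; apply Hder; apply VD_gauss_q; auto).
      unfold inner. unfold mm; repeat (rewrite Hadd || rewrite Hsc). unfold Wq, DD.
      pose proof (del_pos u q Hu). pose proof (kap_pos u Hu).
      field'. repeat split; lra.
    + apply DRval. apply Hder. unfold D2. apply VEX_VD. apply VEX_Phi2; auto.
Qed.

Lemma LAPvec u p : al < u < be -> cos p <> 0 ->
  laplaceII_vec X (gauss X) u p = vscal (- / Wq u p) (vadd (D1 u p) (D2 u p)).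
Proof.
  intros Hu Hc. unfold laplaceII_vec. apply V3eq; vl.
  - rewrite (LAP c1); auto. apply proj_c1.
  - rewrite (LAP c2); auto. apply proj_c2.
  - rewrite (LAP c3); auto. apply proj_c3.
Qed.

Lemma dot_add v w z : dot (vadd v w) z = dot v z + dot w z.
Proof. vx; ring. Qed.
Lemma dot_scal k v z : dot (vscal k v) z = k * dot v z.
Proof. vx; ring. Qed.
Lemma dot_0 z : dot (mkV 0 0 0) z = 0.
Proof. vx; ring. Qed.

Lemma Lb u p : al < u < be -> cos p <> 0 ->
  dot (laplaceII_vec X (gauss X) u p) (bb u) =
  sin p * (4 * r * kap u * cos p - 3) / (2 * r * del u p).
Proof.
  intros Hu Hc. rewrite LAPvec by auto.
  destruct (EX_Om u p Hu Hc) as [dOm HdOm].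
  destruct (EX_taudel u p Hu) as [dT HdT].
  pose proof (D_Wq u p Hu Hc) as HdW.
  assert (E1 : D1 u p = vadd (vscal dOm (T u)) (vscal (Om p u) (A2 u))).
  { unfold D1. apply VD_vder. apply (VD_scal (Om p) T). exact HdOm. apply VD_T; auto. }
  assert (E2 : D2 u p = vadd (vscal (sign (DD u p) * DDp u p / (2 * sqrt (Rabs (DD u p)))) (inner u p))
      (vscal (Wq u p) (vadd (vadd (vscal dT (T u)) (vscal (tau u / del u p) (mkV 0 0 0)))
         (vadd (vscal 0 (mm u p)) (vscal (- / r) (vscal (-1) (nn u p))))))).
  { unfold D2. apply VD_vder. apply (VD_scal (Wq u) (fun q => inner u q)). exact HdW.
    apply VD_inner; auto. }
  rewrite E1, E2. unfold inner. rewrite (HA2 u Hu).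
  repeat (rewrite dot_add || rewrite dot_scal). rewrite !dot_0.
  assert (Hmb : dot (mm u p) (bb u) = cos p).
  { replace (bb u) with (FR u 0 0 1).
    2:{ unfold FR; destruct (T u) as [[? ?] ?], (hh u) as [[? ?] ?], (bb u) as [[? ?] ?]; apply V3eq; vx; ring. }
    rewrite mm_FR, FR_dot by auto. ring. }
  assert (Hnb : dot (nn u p) (bb u) = sin p).
  { replace (bb u) with (FR u 0 0 1).
    2:{ unfold FR; destruct (T u) as [[? ?] ?], (hh u) as [[? ?] ?], (bb u) as [[? ?] ?]; apply V3eq; vx; ring. }
    rewrite nn_FR, FR_dot by auto. ring. }
  rewrite Hmb, Hnb, HTb, Hhb by auto.
  pose proof (del_pos u p Hu). pose proof (kap_pos u Hu). pose proof (DD_neq0 u p Hu Hc) as HD.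
  assert (HW : Wq u p * Wq u p = Rabs (DD u p)) by (apply sqrt_sqrt; apply Rabs_pos).
  assert (HWp : 0 < Wq u p) by (apply sqrt_lt_R0; apply Rabs_pos_lt; auto).
  change (sqrt (Rabs (DD u p))) with (Wq u p).
  transitivity (sign (DD u p) * DDp u p * cos p / (2 * (Wq u p * Wq u p) * r) - sin p / r).
  { field'. lra. }
  rewrite HW.
  destruct (Rlt_or_le 0 (DD u p)) as [Hpos|Hneg].
  - rewrite sign_eq_1, Rabs_right by lra. unfold DD, DDp, del in *. field'. repeat split; lra.
  - rewrite sign_eq_m1, Rabs_left by lra. unfold DD, DDp, del in *. field'. repeat split; lra.
Qed.
End Curve.

Lemma chain (f f' : R -> R) x0 (eps : posreal) :
  (forall q, Rabs (q - x0) < eps -> f q = 0) -> (forall q, is_derive f q (f' q)) ->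
  forall q, Rabs (q - x0) < eps -> f' q = 0.
Proof.
  intros H Hd q Hq. apply (D_zero_loc f q).
  - assert (Hq' : x0 - eps < q < x0 + eps).
    { apply Rabs_def2 in Hq. lra. }
    eapply filter_imp; [|apply (loc_interval _ _ q Hq')].
    intros t Ht. apply H. apply Rabs_def1; lra.
  - apply Hd.
Qed.

Lemma trig_contra (r k al bt x0 : R) (eps : posreal) :
  0 < r -> 0 < r * k < 1 -> cos x0 <> 0 ->
  (forall q, Rabs (q - x0) < eps ->
     sin q * (4 * r * k * cos q - 3) / (2 * r * (1 - r * k * cos q)) = al * cos q + bt * sin q) ->
  False.
Proof.
  intros Hr Hk Hc H.
  set (e := r * k) in *.
  set (P := 4 * e + 2 * r * e * bt). set (Q := -3 - 2 * r * bt).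
  set (R0 := -2 * r * al). set (S := 2 * r * e * al).
  set (g := fun q => P * sin q * cos q + Q * sin q + R0 * cos q + S * (cos q * cos q)).
  set (g1 := fun q => P * (cos q * cos q - sin q * sin q) + Q * cos q - R0 * sin q - 2 * S * sin q * cos q).
  set (g2 := fun q => -4 * P * sin q * cos q - Q * sin q - R0 * cos q - 2 * S * (cos q * cos q - sin q * sin q)).
  set (g3 := fun q => -4 * P * (cos q * cos q - sin q * sin q) - Q * cos q + R0 * sin q + 8 * S * sin q * cos q).
  set (g4 := fun q => 16 * P * sin q * cos q + Q * sin q + R0 * cos q + 8 * S * (cos q * cos q - sin q * sin q)).
  assert (H0 : forall q, Rabs (q - x0) < eps -> g q = 0).
  { intros q Hq. specialize (H q Hq).
    pose proof (COS_bound q).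
    assert (Hec : e * cos q < 1) by nra.
    assert (Hd : 0 < 2 * r * (1 - e * cos q)) by nra.
    assert (Hx : sin q * (4 * e * cos q - 3) = (al * cos q + bt * sin q) * (2 * r * (1 - e * cos q))).
    { unfold e in *. rewrite <- H. field. lra. }
    unfold g, P, Q, R0, S.
    transitivity (sin q * (4 * e * cos q - 3) - (al * cos q + bt * sin q) * (2 * r * (1 - e * cos q))).
    ring. rewrite Hx. ring. }
  assert (H1 : forall q, Rabs (q - x0) < eps -> g1 q = 0).
  { apply (chain g g1 x0 eps H0). intros q. unfold g, g1. auto_derive. auto. ring. }
  assert (H2 : forall q, Rabs (q - x0) < eps -> g2 q = 0).
  { apply (chain g1 g2 x0 eps H1). intros q. unfold g1, g2. auto_derive. auto. ring. }
  assert (H3 : forall q, Rabs (q - x0) < eps -> g3 q = 0).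
  { apply (chain g2 g3 x0 eps H2). intros q. unfold g2, g3. auto_derive. auto. ring. }
  assert (H4 : forall q, Rabs (q - x0) < eps -> g4 q = 0).
  { apply (chain g3 g4 x0 eps H3). intros q. unfold g3, g4. auto_derive. auto. ring. }
  assert (Hx0 : Rabs (x0 - x0) < eps) by (rewrite Rminus_diag, Rabs_R0; apply cond_pos).
  specialize (H0 x0 Hx0). specialize (H1 x0 Hx0). specialize (H2 x0 Hx0).
  specialize (H3 x0 Hx0). specialize (H4 x0 Hx0).
  unfold g, g1, g2, g3, g4 in *.
  set (c := cos x0) in *. set (s := sin x0) in *.
  assert (Hsc : c * c + s * s = 1).
  { unfold c, s. pose proof (sin2_cos2 x0) as E. unfold Rsqr in E. lra. }
  assert (HS : S = 0).
  { pose proof (f_equal (Rmult S) Hsc) as E. lra. }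
  assert (Hal : al = 0).
  { unfold S in HS. assert (0 < 2 * r * e) by nra.
    apply (Rmult_eq_reg_l (2 * r * e)); [|lra]. lra. }
  assert (HR : R0 = 0) by (unfold R0; rewrite Hal; ring).
  assert (HQ : Q = 0).
  { rewrite HR, HS in *. assert (E : 3 * Q * c = 0) by lra.
    apply (Rmult_eq_reg_r (3 * c)). lra. intro; apply Hc; fold c; lra. }
  assert (HP : P = 0).
  { rewrite HR, HS, HQ in *.
    assert (E1 : P * s * c = 0) by lra. assert (E2 : P * (c * c - s * s) = 0) by lra.
    destruct (Req_dec P 0) as [|HP]; auto.
    assert (Es : s = 0).
    { assert (E3 : P * (s * c) = 0) by lra. apply Rmult_integral in E3.
      destruct E3 as [E3|E3]; [contradiction|]. apply Rmult_integral in E3.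
      destruct E3; auto. exfalso; apply Hc; auto. }
    rewrite Es in E2, Hsc. assert (E4 : P * (c * c) = 0) by lra.
    rewrite (Rmult_comm P) in E4. replace (c * c) with 1 in E4 by lra. lra. }
  unfold P, Q in *.
  assert (E : 2 * r * bt = -3) by lra.
  assert (E' : 2 * r * e * bt = e * (2 * r * bt)) by ring.
  rewrite E', E in HP. lra.
Qed.

Theorem theorem1 :
  forall (a : R -> V3) (al be r : R) (W : R * R -> Prop),
    al < be ->
    smooth_curve a al be ->
    (forall u, al < u < be -> vnorm (vder a u) = 1) ->
    (forall u, al < u < be -> 0 < curvature a u) ->
    0 < r ->
    (forall u, al < u < be -> r < / curvature a u) ->
    open W ->
    (exists z, W z) ->
    (forall u p, W (u, p) -> al < u < be /\ cos p <> 0) ->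
    ~ (exists A : M3, forall u p, W (u, p) ->
         laplaceII_vec (tube a r) (gauss (tube a r)) u p
         = mapply A (gauss (tube a r) u p)).
Proof.
  intros a al be r W Hab Hsm Hunit Hkp Hr Hrk HW [[u0 p0] Hz] HWc [A HA].
  destruct (HWc u0 p0 Hz) as [Hu0 Hc0].
  destruct (HW (u0, p0) Hz) as [eps Heps].
  apply (trig_contra r (kap a u0) (- dot (mapply A (hh a u0)) (bb a u0))
           (- dot (mapply A (bb a u0)) (bb a u0)) p0 eps Hr).
  - split; [apply Rmult_lt_0_compat; [auto| apply Hkp; auto] | eapply rk_lt1; eauto].
  - exact Hc0.
  - intros q Hq.
    assert (Wq : W (u0, q)).
    { apply Heps. split. apply ball_center. simpl. unfold ball; simpl. unfold AbsRing_ball. simpl.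
      unfold abs, minus, plus, opp; simpl. exact Hq. }
    destruct (HWc u0 q Wq) as [_ Hcq].
    pose proof (HA u0 q Wq) as E.
    apply (f_equal (fun v => dot v (bb a u0))) in E.
    erewrite Lb in E; eauto.
    erewrite L3 in E; eauto.
    unfold del in E. rewrite E. unfold nn.
    destruct A as [[[[x1 x2] x3] [[y1 y2] y3]] [[z1 z2] z3]].
    destruct (hh a u0) as [[? ?] ?], (bb a u0) as [[? ?] ?].
    unfold mapply. vx. ring.
Qed.
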